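(* Let $\ast$ be a continuous $t$-norm and let $\{(X_n,M_n,\ast)\}_{n\in\mathbb N}$ be a sequence of nonempty compact non-Archimedean fuzzy metric spaces satisfying: (1) $\ast$ satisfies (TN1); (2) there exists a nondecreasing left-continuous function $C:(0,\infty)\to(0,1]$ with $0<C(s)\le\mathrm{diam}_s(X_n)$ for all $s>0$ and all $n$; (3) for every $t>0$ and $0<\varepsilon<1$ there is $N(\varepsilon,t)\in\mathbb N$ with $\mathrm{Cov}(X_n,\varepsilon,t)\le N(\varepsilon,t)$ for all $n$; (4) for every $t>0$ and $0<\varepsilon<1$, with $N=N(\varepsilon,t)$, there exist, for each $n$, a $(t,\varepsilon)$-net $\{x_i^n\}_{i=1}^N$ in $X_n$ such that for all $n,m$, all $s>t$ and all $i,j\in\{1,\dots,N\}$: if $M_n(x_i^n,x_j^n,s)<M_m(x_i^m,x_j^m,s)$ then $\dfrac{M_n(x_i^n,x_j^n,s)}{M_m(x_i^m,x_j^m,s)\ast(1-\varepsilon)}\ge\dfrac{M_n(x_i^n,x_j^n,t)}{M_m(x_i^m,x_j^m,t)\ast(1-\varepsilon)}$. Then $\{(X_n,M_n,\ast)\}_{n}$ has a Cauchy subsequence with respect to $M_{GH}$.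
   Context: A continuous $t$-norm is a binary operation $\ast:[0,1]\times[0,1]\to[0,1]$ which is associative, commutative, continuous, satisfies $a\ast 1=a$ for all $a$, and is monotone. Property (TN1): $a-a\ast b\ge a\ast(1-b)$ for all $a,b\in[0,1]$. A fuzzy metric space $(X,M,\ast)$: $M:X\times X\times[0,\infty)\to[0,1]$ with, for all $x,y,z$ and $t,s>0$: (KM1) $M(x,y,0)=0$; (KM2) $M(x,y,t)=1$ for all $t>0$ iff $x=y$; (KM3) $M(x,y,t)=M(y,x,t)$; (KM4) $M(x,y,t)\ast M(y,z,s)\le M(x,z,t+s)$; (KM5) $M(x,y,\cdot)$ left continuous on $[0,\infty)$. Non-Archimedean: $M(x,z,\max\{t,s\})\ge M(x,y,t)\ast M(y,z,s)$. Balls $B(x,\varepsilon,t)=\{y: M(x,y,t)>1-\varepsilon\}$ generate the topology; ''compact'' refers to it. $H_M(A,B,t)=\min\{\inf_{a\in A}\sup_{b\in B}M(a,b,t),\ \inf_{b\in B}\sup_{a\in A}M(a,b,t)\}$ for nonempty compact $A,B$. A fuzzy metric on $X\sqcup Y$ is admissible if it restricts to the given ones on $X$ and $Y$; $M_{GH}(X,Y,t)=\sup\{H_M(X,Y,t): M$ admissible non-Archimedean fuzzy metric on $X\sqcup Y$ with $t$-norm $\ast\}$. A sequence $(X_n)$ is Cauchy w.r.t. $M_{GH}$ if for every $t>0$, $0<\varepsilon<1$ there is $n_0$ with $M_{GH}(X_n,X_m,t)>1-\varepsilon$ for all $n,m\ge n_0$. A family $\{x_i\}_{i=1}^N$ is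 a $(t,\varepsilon)$-net in $X$ if each $x\in X$ has some $i$ with $M(x,x_i,t)>1-\varepsilon$. $\mathrm{Cov}(X,\varepsilon,t)$ is the minimal cardinality of $C\subseteq X$ with $X=\bigcup_{c\in C}B(c,\varepsilon,t)$. $\mathrm{diam}_s(X)=\inf\{M(x,y,s):x,y\in X\}$. *)

(* Defs.v *)
From Stdlib Require Import Reals List.
From Coquelicot Require Import Coquelicot.
Open Scope R_scope.

Definition in01 (a : R) : Prop := 0 <= a <= 1.

Definition cont_tnorm (star : R -> R -> R) : Prop :=
  (forall a b, in01 a -> in01 b -> in01 (star a b)) /\
  (forall a b c, in01 a -> in01 b -> in01 c ->
      star a (star b c) = star (star a b) c) /\
  (forall a b, in01 a -> in01 b -> star a b = star b a) /\
  (forall a, in01 a -> star a 1 = a) /\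
  (forall a b c d, in01 a -> in01 b -> in01 c -> in01 d ->
      a <= c -> b <= d -> star a b <= star c d) /\
  (forall a b, in01 a -> in01 b -> forall eps, 0 < eps -> exists delta, 0 < delta /\
      forall a' b', in01 a' -> in01 b' -> Rabs (a - a') < delta -> Rabs (b - b') < delta ->
        Rabs (star a b - star a' b') < eps).

Definition TN1 (star : R -> R -> R) : Prop :=
  forall a b, in01 a -> in01 b -> a - star a b >= star a (1 - b).

(* M x y t is only meaningful for t >= 0; values at t < 0 are ignored. *)
Definition fuzzy_metric {X : Type} (M : X -> X -> R -> R) (star : R -> R -> R) : Prop :=
  (forall x y t, 0 <= t -> in01 (M x y t)) /\
  (forall x y, M x y 0 = 0) /\
  (forall x y, (forall t, 0 < t -> M x y t = 1) <-> x = y) /\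
  (forall x y t, 0 < t -> M x y t = M y x t) /\
  (forall x y z t s, 0 < t -> 0 < s ->
      star (M x y t) (M y z s) <= M x z (t + s)) /\
  (forall x y t, 0 < t -> forall eps, 0 < eps -> exists delta, 0 < delta /\
      forall u, 0 <= u -> t - delta < u -> u <= t ->
        Rabs (M x y u - M x y t) < eps).

Definition non_archimedean {X : Type} (M : X -> X -> R -> R) (star : R -> R -> R) : Prop :=
  forall x y z t s, 0 < t -> 0 < s ->
    star (M x y t) (M y z s) <= M x z (Rmax t s).

Definition ball_f {X : Type} (M : X -> X -> R -> R) (x : X) (eps t : R) (y : X) : Prop :=
  M x y t > 1 - eps.

Definition fopen {X : Type} (M : X -> X -> R -> R) (U : X -> Prop) : Prop :=
  forall x, U x -> exists eps t, 0 < eps < 1 /\ 0 < t /\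
    forall y, ball_f M x eps t y -> U y.

Definition fcompact_space {X : Type} (M : X -> X -> R -> R) : Prop :=
  forall (I : Type) (U : I -> X -> Prop),
    (forall i, fopen M (U i)) -> (forall x, exists i, U i x) ->
    exists l : list I, forall x, exists i, In i l /\ U i x.

Definition sup_R (P : R -> Prop) : R := real (Lub_Rbar P).
Definition inf_R (P : R -> Prop) : R := real (Glb_Rbar P).

Definition H_sum {X Y : Type} (M : (X + Y) -> (X + Y) -> R -> R) (t : R) : R :=
  Rmin
    (inf_R (fun r => exists a : X, r = sup_R (fun u => exists b : Y, u = M (inl a) (inr b) t)))
    (inf_R (fun r => exists b : Y, r = sup_R (fun u => exists a : X, u = M (inl a) (inr b) t))).

Definition admissible {X Y : Type} (MX : X -> X -> R -> R) (MY : Y -> Y -> R -> R)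
  (star : R -> R -> R) (M : (X + Y) -> (X + Y) -> R -> R) : Prop :=
  fuzzy_metric M star /\ non_archimedean M star /\
  (forall a b t, 0 <= t -> M (inl a) (inl b) t = MX a b t) /\
  (forall a b t, 0 <= t -> M (inr a) (inr b) t = MY a b t).

Definition M_GH {X Y : Type} (MX : X -> X -> R -> R) (MY : Y -> Y -> R -> R)
  (star : R -> R -> R) (t : R) : R :=
  sup_R (fun r => exists M : (X + Y) -> (X + Y) -> R -> R,
                    admissible MX MY star M /\ r = H_sum M t).

(* (t,eps)-net indexed by 0..N-1 *)
Definition is_net {X : Type} (M : X -> X -> R -> R) (t eps : R) (N : nat) (x : nat -> X) : Prop :=
  forall y : X, exists i, (i < N)%nat /\ M y (x i) t > 1 - eps.

Definition Cov {X : Type} (M : X -> X -> R -> R) (eps t : R) : Rbar :=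
  Glb_Rbar (fun r => exists l : list X, NoDup l /\
              (forall y, exists c, In c l /\ ball_f M c eps t y) /\ r = INR (length l)).

Definition diam {X : Type} (M : X -> X -> R -> R) (s : R) : Rbar :=
  Glb_Rbar (fun r => exists x y : X, r = M x y s).

(* Main.v *)
Require Import Defs.
From Stdlib Require Import Reals List Lra Lia ZArith ClassicalEpsilon Classical.
From Coquelicot Require Import Coquelicot.
Open Scope R_scope.



Lemma in01_0 : in01 0. Proof. unfold in01; lra. Qed.
Lemma in01_1 : in01 1. Proof. unfold in01; lra. Qed.
#[local] Hint Resolve in01_0 in01_1 : core.

Lemma st_in st : cont_tnorm st -> forall a b, in01 a -> in01 b -> in01 (st a b).
Proof. intros H; apply H. Qed.
Lemma st_assoc st : cont_tnorm st -> forall a b c, in01 a -> in01 b -> in01 c ->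
  st a (st b c) = st (st a b) c.
Proof. intros H; apply H. Qed.
Lemma st_comm st : cont_tnorm st -> forall a b, in01 a -> in01 b -> st a b = st b a.
Proof. intros H; apply H. Qed.
Lemma st_1 st : cont_tnorm st -> forall a, in01 a -> st a 1 = a.
Proof. intros H; apply H. Qed.
Lemma st_1l st : cont_tnorm st -> forall a, in01 a -> st 1 a = a.
Proof. intros H a Ha. rewrite (st_comm st H); auto. apply st_1; auto. Qed.
Lemma st_mono st : cont_tnorm st -> forall a b c d, in01 a -> in01 b -> in01 c -> in01 d ->
      a <= c -> b <= d -> st a b <= st c d.
Proof. intros H; apply H. Qed.
Lemma st_cont st : cont_tnorm st -> forall a b, in01 a -> in01 b -> forall eps, 0 < eps -> exists delta, 0 < delta /\
      forall a' b', in01 a' -> in01 b' -> Rabs (a - a') < delta -> Rabs (b - b') < delta ->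
        Rabs (st a b - st a' b') < eps.
Proof. intros H; apply H. Qed.
Lemma st_le_l st : cont_tnorm st -> forall a b, in01 a -> in01 b -> st a b <= a.
Proof. intros H a b Ha Hb. rewrite <- (st_1 st H a Ha) at 2.
  apply st_mono; auto; [lra| apply Hb]. Qed.
Lemma st_le_r st : cont_tnorm st -> forall a b, in01 a -> in01 b -> st a b <= b.
Proof. intros H a b Ha Hb. rewrite (st_comm st H); auto. apply st_le_l; auto. Qed.
Lemma st_ge0 st : cont_tnorm st -> forall a b, in01 a -> in01 b -> 0 <= st a b.
Proof. intros H a b Ha Hb. apply (st_in st H a b Ha Hb). Qed.
Lemma st_0r st : cont_tnorm st -> forall a, in01 a -> st a 0 = 0.
Proof. intros H a Ha. pose proof (st_le_r st H a 0 Ha in01_0).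
  pose proof (st_ge0 st H a 0 Ha in01_0). lra. Qed.
Lemma st_0l st : cont_tnorm st -> forall a, in01 a -> st 0 a = 0.
Proof. intros H a Ha. rewrite (st_comm st H); auto. apply st_0r; auto. Qed.

Definition clamp (x : R) := Rmax 0 (Rmin x 1).
Lemma clamp_in x : in01 (clamp x).
Proof. unfold clamp, in01, Rmax, Rmin; repeat destruct Rle_dec; lra. Qed.
Lemma clamp_id x : in01 x -> clamp x = x.
Proof. unfold clamp, in01, Rmax, Rmin; repeat destruct Rle_dec; lra. Qed.
Lemma clamp_lip x y : Rabs (clamp x - clamp y) <= Rabs (x - y).
Proof. unfold clamp, Rmax, Rmin; repeat destruct Rle_dec; unfold Rabs; repeat destruct Rcase_abs; lra. Qed.

Lemma cont_from_eps (f : R -> R) c :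
  (forall eps, 0 < eps -> exists d, 0 < d /\ forall x, Rabs (x - c) < d -> Rabs (f x - f c) < eps) ->
  continuity_pt f c.
Proof.
  intros H eps Heps. destruct (H eps Heps) as [d [Hd Hx]]. exists d; split; [lra|].
  intros x [_ Hxd]. simpl in *. unfold R_dist in *. apply Hx; auto.
Qed.

Lemma st_clamp_cont st : cont_tnorm st -> forall a, in01 a -> forall c,
  continuity_pt (fun y => st a (clamp y)) c.
Proof.
  intros H a Ha c. apply cont_from_eps. intros eps Heps.
  destruct (st_cont st H a (clamp c) Ha (clamp_in c) eps Heps) as [d [Hd Hc]].
  exists d; split; auto. intros x Hx.
  rewrite Rabs_minus_sym. apply Hc; auto using clamp_in.
  rewrite Rminus_diag, Rabs_R0; auto.
  rewrite Rabs_minus_sym. eapply Rle_lt_trans; [apply clamp_lip|]; auto.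
Qed.

Lemma st_clamp_cont_l st : cont_tnorm st -> forall g, in01 g -> forall c,
  continuity_pt (fun y => st (clamp y) g) c.
Proof.
  intros H g Hg c. apply cont_from_eps. intros eps Heps.
  destruct (st_cont st H (clamp c) g (clamp_in c) Hg eps Heps) as [d [Hd Hc]].
  exists d; split; auto. intros x Hx.
  rewrite Rabs_minus_sym. apply Hc; auto using clamp_in.
  rewrite Rabs_minus_sym. eapply Rle_lt_trans; [apply clamp_lip|]; auto.
  rewrite Rminus_diag, Rabs_R0; auto.
Qed.

Lemma st_strict st : cont_tnorm st -> TN1 st -> forall L g, 0 < L <= 1 -> 0 <= g < 1 ->
  st L g < L.
Proof.
  intros H T L g HL Hg.
  assert (HL1 : in01 L) by (unfold in01; lra).
  assert (Hg1 : in01 g) by (unfold in01; lra).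
  destruct (Rlt_or_le (st L g) L) as [|Hge]; auto. exfalso.
  assert (E : st L g = L) by (pose proof (st_le_l st H L g HL1 Hg1); lra).
  set (F := fun y => in01 y /\ st L y = L).
  pose proof (Glb_Rbar_correct F) as [Hlb Hglb].
  assert (Hfin : exists f, Glb_Rbar F = Finite f /\ 0 <= f <= g).
  { destruct (Glb_Rbar F) as [f| |] eqn:Ef.
    - exists f; split; auto. split.
      + assert (Rbar_le (Finite 0) (Finite f)).
        { apply Hglb. intros x [[Hx _] _]. simpl. auto. } simpl in H0; auto.
      + assert (Rbar_le (Finite f) (Finite g)) by (apply Hlb; split; auto). simpl in H0; auto.
    - assert (Rbar_le p_infty (Finite g)) by (apply Hlb; split; auto). simpl in H0; contradiction.
    - assert (Rbar_le (Finite 0) m_infty). { apply Hglb. intros x [[Hx _] _]. simpl. auto. }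
      simpl in H0; contradiction. }
  destruct Hfin as [f [Ef Hf]]. rewrite Ef in Hlb, Hglb.
  assert (Hf1 : in01 f) by (unfold in01; lra).
  assert (SF : st L f = L).
  { destruct (Rlt_or_le (st L f) L) as [Hlt|]; [|pose proof (st_le_l st H L f HL1 Hf1); lra].
    destruct (st_cont st H L f HL1 Hf1 (L - st L f)) as [d [Hd Hc]]; [lra|].
    destruct (classic (exists y, F y /\ y < f + d)) as [[y [[Hy1 Hy2] Hyd]]|Hn].
    - assert (Rbar_le (Finite f) (Finite y)) by (apply Hlb; split; auto). simpl in H0.
      assert (Rabs (st L f - st L y) < L - st L f).
      { apply Hc; auto. rewrite Rminus_diag, Rabs_R0; auto. rewrite Rabs_left1; lra. }
      rewrite Hy2 in H1. rewrite Rabs_left1 in H1; lra.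
    - assert (Rbar_le (Finite (f + d)) (Finite f)).
      { apply Hglb. intros x Fx. simpl. destruct (Rlt_or_le x (f+d)); [|lra]. exfalso; eauto. }
      simpl in H0; lra. }
  assert (Hfpos : 0 < f).
  { destruct (Rlt_or_le 0 f); auto. assert (f = 0) by lra. subst f.
    rewrite st_0r in SF; auto; lra. }
  assert (Idem : st f f = f).
  { assert (Fff : F (st f f)).
    { split; [apply st_in; auto|]. rewrite st_assoc, SF, SF; auto. }
    assert (Rbar_le (Finite f) (Finite (st f f))) by (apply Hlb; auto). simpl in H0.
    pose proof (st_le_l st H f f Hf1 Hf1). lra. }
  assert (Hw : in01 (1 - f)) by (unfold in01; lra).
  assert (Z : st f (1 - f) = 0).
  { pose proof (T f f Hf1 Hf1). rewrite Idem in H0. pose proof (st_ge0 st H f (1-f) Hf1 Hw). lra. }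
  destruct (Rle_or_lt f (1 - f)).
  - pose proof (st_mono st H f f f (1-f) Hf1 Hf1 Hf1 Hw (Rle_refl _) H0). lra.
  - destruct (IVT (fun y => st f (clamp y) - (1 - f)) 0 1) as [y [Hy Hy0]].
    + intro c. apply continuity_pt_minus; [apply st_clamp_cont; auto| apply continuity_pt_const; intros ? ?; auto].
    + lra.
    + rewrite clamp_id; auto. rewrite st_0r; auto; lra.
    + rewrite clamp_id; auto. rewrite st_1; auto; lra.
    + assert (Ey : st f (clamp y) = 1 - f) by lra.
      rewrite <- Ey in Z. rewrite st_assoc, Idem in Z; auto using clamp_in. lra.
Qed.


Lemma margin st : cont_tnorm st -> TN1 st -> forall c g, 0 < c <= 1 -> 0 <= g < 1 ->
  exists d, 0 < d /\ forall b, c <= b <= 1 -> st b g <= b - d.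
Proof.
  intros H T c g Hc Hg. assert (Hg1 : in01 g) by (unfold in01; lra).
  destruct (continuity_ab_min (fun x => x - st (clamp x) g) c 1) as [mx [Hmx Hmx2]]; [lra| |].
  - intros x _. apply continuity_pt_minus; [apply continuity_pt_id| apply st_clamp_cont_l; auto].
  - exists (mx - st (clamp mx) g). split.
    + rewrite clamp_id by (unfold in01; lra). pose proof (st_strict st H T mx g). lra.
    + intros b Hb. specialize (Hmx b Hb). simpl in Hmx. rewrite (clamp_id b) in Hmx by (unfold in01; lra). lra.
Qed.

Lemma sup_R_ge (E : R -> Prop) c x : (forall r, E r -> r <= c) -> E x -> x <= sup_R E.
Proof.
  intros Hb Ex. unfold sup_R. pose proof (Lub_Rbar_correct E) as [Hub Hl].
  assert (A1 := Hub x Ex). assert (A2 : Rbar_le (Lub_Rbar E) (Finite c)).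
  { apply Hl. intros r Er. simpl. auto. }
  destruct (Lub_Rbar E); simpl in *; try contradiction; auto.
Qed.
Lemma sup_R_le (E : R -> Prop) c : 0 <= c -> (forall r, E r -> r <= c) -> sup_R E <= c.
Proof.
  intros Hc Hb. unfold sup_R. pose proof (Lub_Rbar_correct E) as [Hub Hl].
  assert (A2 : Rbar_le (Lub_Rbar E) (Finite c)).
  { apply Hl. intros r Er. simpl. auto. }
  destruct (Lub_Rbar E); simpl in *; auto.
Qed.
Lemma inf_R_ge (E : R -> Prop) v x : E x -> (forall r, E r -> v <= r) -> v <= inf_R E.
Proof.
  intros Ex Hb. unfold inf_R. pose proof (Glb_Rbar_correct E) as [Hlb Hl].
  assert (A1 := Hlb x Ex). assert (A2 : Rbar_le (Finite v) (Glb_Rbar E)).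
  { apply Hl. intros r Er. simpl. auto. }
  destruct (Glb_Rbar E); simpl in *; try contradiction; auto.
Qed.
Lemma inf_R_le (E : R -> Prop) c x : 0 <= c -> E x -> x <= c -> inf_R E <= c.
Proof.
  intros Hc Ex Hx. unfold inf_R. pose proof (Glb_Rbar_correct E) as [Hlb Hl].
  assert (A1 := Hlb x Ex).
  destruct (Glb_Rbar E); simpl in *; try contradiction; lra.
Qed.

Definition inf (P : nat -> Prop) := forall n, exists m, (n <= m)%nat /\ P m.

Lemma pigeon K : forall (f : nat -> nat) P, inf P -> (forall n, P n -> (f n <= K)%nat) ->
  exists b, inf (fun n => P n /\ f n = b).
Proof.
  induction K; intros f P HP Hb.
  - exists 0%nat. intros n. destruct (HP n) as [m [Hm Pm]]. exists m. split; auto. split; auto.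
    specialize (Hb m Pm). lia.
  - destruct (classic (inf (fun n => P n /\ f n = S K))) as [Hi|Hn]; [eauto|].
    assert (Hn0 : exists n0, forall m, (n0 <= m)%nat -> ~ (P m /\ f m = S K)).
    { apply not_all_ex_not in Hn. destruct Hn as [n0 Hn0]. exists n0. intros m Hm Hc.
      apply Hn0. eauto. }
    destruct Hn0 as [n0 Hn0].
    destruct (IHK f (fun n => P n /\ f n <> S K)) as [b Hb'].
    + intros n. destruct (HP (Nat.max n n0)) as [m [Hm Pm]]. exists m. split; [lia|].
      split; auto. intro E. apply (Hn0 m); [lia|auto].
    + intros n [Pn Hne]. specialize (Hb n Pn). lia.
    + exists b. intros n. destruct (Hb' n) as [m [Hm [[Pm _] Em]]]. eauto.
Qed.

Lemma box_close (a : nat -> R) P h : 0 < h -> inf P -> (forall n, 0 <= a n <= 1) ->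
  exists Q, inf Q /\ (forall n, Q n -> P n) /\ (forall n m, Q n -> Q m -> Rabs (a n - a m) < h).
Proof.
  intros Hh HP Ha.
  set (f := fun n => Z.to_nat (up (a n / h))).
  destruct (pigeon (Z.to_nat (up (1 / h))) f P HP) as [b Hb].
  - intros n _. unfold f. apply Z2Nat.inj_le.
    + apply le_IZR. destruct (archimed (a n / h)). specialize (Ha n).
      assert (0 <= a n / h) by (apply Rdiv_le_0_compat; lra). lra.
    + apply le_IZR. destruct (archimed (1 / h)).
      assert (0 <= 1 / h) by (apply Rdiv_le_0_compat; lra). lra.
    + assert (IZR (up (a n / h)) < IZR (up (1 / h)) + 1).
      { destruct (archimed (a n / h)), (archimed (1/h)). specialize (Ha n).
        assert (a n / h <= 1 / h) by (apply Rmult_le_compat_r; [apply Rlt_le, Rinv_0_lt_compat|]; lra).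
        lra. }
      rewrite <- plus_IZR in H. apply lt_IZR in H. lia.
  - exists (fun n => P n /\ f n = b). split; auto. split; [intros n [? ?]; auto|].
    intros n m [Pn En] [Pm Em]. rewrite <- Em in En. unfold f in En.
    apply Z2Nat.inj in En.
    + destruct (archimed (a n / h)), (archimed (a m / h)). rewrite En in *.
      assert (Rabs (a n / h - a m / h) < 1) by (apply Rabs_def1; lra).
      replace (a n - a m) with (h * (a n / h - a m / h)) by (field; lra).
      rewrite Rabs_mult, Rabs_right by lra. 
      assert (h * Rabs (a n / h - a m / h) < h * 1) by (apply Rmult_lt_compat_l; lra). lra.
    + apply le_IZR. destruct (archimed (a n / h)). specialize (Ha n).
      assert (0 <= a n / h) by (apply Rdiv_le_0_compat; lra). lra.
    + apply le_IZR. destruct (archimed (a m / h)). specialize (Ha m).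
      assert (0 <= a m / h) by (apply Rdiv_le_0_compat; lra). lra.
Qed.

Lemma boxes_close (l : list (nat * nat)) : forall (a : nat * nat -> nat -> R) P h, 0 < h -> inf P ->
  (forall p n, 0 <= a p n <= 1) ->
  exists Q, inf Q /\ (forall n, Q n -> P n) /\
    (forall p, In p l -> forall n m, Q n -> Q m -> Rabs (a p n - a p m) < h).
Proof.
  induction l as [|p l IH]; intros a P h Hh HP Ha.
  - exists P. split; auto. split; auto. intros p [].
  - destruct (IH a P h Hh HP Ha) as [Q1 [HQ1 [S1 C1]]].
    destruct (box_close (a p) Q1 h Hh HQ1 (Ha p)) as [Q2 [HQ2 [S2 C2]]].
    exists Q2. split; auto. split; auto. intros q [<-|Hq] n m Qn Qm; auto.
Qed.

Lemma diagonal (R' : nat -> nat -> nat -> Prop) :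
  (forall k P, inf P -> exists Q, inf Q /\ (forall n, Q n -> P n) /\ (forall n m, Q n -> Q m -> R' k n m)) ->
  exists phi : nat -> nat, (forall k, (phi k < phi (S k))%nat) /\
     (forall k n m, (k <= n)%nat -> (k <= m)%nat -> R' k (phi n) (phi m)).
Proof.
  intros Href.
  set (ref := fun k P => epsilon (inhabits (fun _ : nat => True))
      (fun Q => inf Q /\ (forall n, Q n -> P n) /\ (forall n m, Q n -> Q m -> R' k n m))).
  set (S := fix S k := match k with O => (fun _ : nat => True) | Datatypes.S k' => ref k' (S k') end).
  assert (HS : forall k, inf (S (Datatypes.S k)) /\ (forall n, S (Datatypes.S k) n -> S k n) /\
                    (forall n m, S (Datatypes.S k) n -> S (Datatypes.S k) m -> R' k n m)).
  { induction k.
    - simpl. apply (epsilon_spec _ _ (Href 0%nat _ (fun n => ex_intro _ n (conj (le_n n) I)))).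
    - change (S (Datatypes.S (Datatypes.S k))) with (ref (Datatypes.S k) (S (Datatypes.S k))).
      apply (epsilon_spec _ _ (Href _ _ (proj1 IHk))). }
  assert (Hsub : forall k j, (k <= j)%nat -> forall n, S j n -> S k n).
  { intros k j Hkj. induction Hkj; auto. intros n Hn. apply IHHkj. apply (proj1 (proj2 (HS m))). auto. }
  set (phi := fix phi k := match k with
     | O => epsilon (inhabits 0%nat) (fun m => S 1%nat m)
     | Datatypes.S k' => epsilon (inhabits 0%nat) (fun m => (phi k' < m)%nat /\ S (Datatypes.S k) m) end).
  assert (Hphi : forall k, S (Datatypes.S k) (phi k) /\ (phi k < phi (Datatypes.S k))%nat).
  { assert (A : forall k, S (Datatypes.S k) (phi k)).
    { destruct k.
      - simpl. apply (epsilon_spec _ (fun m => S 1%nat m)). destruct (proj1 (HS 0%nat) 0%nat) as [m [_ Hm]]. eauto.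
      - change (phi (Datatypes.S k)) with (epsilon (inhabits 0%nat) (fun m => (phi k < m)%nat /\ S (Datatypes.S (Datatypes.S k)) m)).
        apply (epsilon_spec _ (fun m => (phi k < m)%nat /\ S (Datatypes.S (Datatypes.S k)) m)).
        destruct (proj1 (HS (Datatypes.S k)) (Datatypes.S (phi k))) as [m [Hm Hm2]]. exists m; split; [lia|auto]. }
    intro k. split; auto.
    change (phi (Datatypes.S k)) with (epsilon (inhabits 0%nat) (fun m => (phi k < m)%nat /\ S (Datatypes.S (Datatypes.S k)) m)).
    apply (epsilon_spec _ (fun m => (phi k < m)%nat /\ S (Datatypes.S (Datatypes.S k)) m)).
    destruct (proj1 (HS (Datatypes.S k)) (Datatypes.S (phi k))) as [m [Hm Hm2]]. exists m; split; [lia|auto]. }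
  exists phi. split; [intro k; apply Hphi|].
  intros k n m Hn Hm. apply (proj2 (proj2 (HS k))).
  - apply (Hsub _ (Datatypes.S n)); [lia|apply Hphi].
  - apply (Hsub _ (Datatypes.S m)); [lia|apply Hphi].
Qed.

#[local] Hint Resolve in01_0 in01_1 : core.

Lemma fm_in {X} (M : X -> X -> R -> R) st : fuzzy_metric M st -> forall x y t, 0 <= t -> in01 (M x y t).
Proof. intros H; apply H. Qed.
Lemma fm_0 {X} (M : X -> X -> R -> R) st : fuzzy_metric M st -> forall x y, M x y 0 = 0.
Proof. intros H; apply H. Qed.
Lemma fm_refl {X} (M : X -> X -> R -> R) st : fuzzy_metric M st -> forall x t, 0 < t -> M x x t = 1.
Proof. intros H x t Ht. destruct H as [_ [_ [H _]]]. apply (proj2 (H x x)); auto. Qed.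
Lemma fm_sym {X} (M : X -> X -> R -> R) st : fuzzy_metric M st -> forall x y t, 0 < t -> M x y t = M y x t.
Proof. intros H; apply H. Qed.
Lemma fm_lc {X} (M : X -> X -> R -> R) st : fuzzy_metric M st -> forall x y t, 0 < t -> forall eps, 0 < eps -> exists delta, 0 < delta /\
      forall u, 0 <= u -> t - delta < u -> u <= t -> Rabs (M x y u - M x y t) < eps.
Proof. intros H; apply H. Qed.
Lemma fm_mono {X} (M : X -> X -> R -> R) st : cont_tnorm st -> fuzzy_metric M st ->
  forall x y t t', 0 <= t -> t <= t' -> M x y t <= M x y t'.
Proof.
  intros Hs H x y t t' Ht Htt. destruct (Req_dec t t') as [<-|Hne]; [lra|].
  destruct (Req_dec t 0) as [->|Ht0].
  - rewrite (fm_0 M st H). apply (fm_in M st H); lra.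
  - destruct H as [Hin [H0 [H2 [H3 [H4 H5]]]]].
    specialize (H4 x y y t (t' - t)). replace (t + (t' - t)) with t' in H4 by ring.
    rewrite (proj2 (H2 y y) eq_refl (t' - t)) in H4 by lra.
    assert (in01 (M x y t)) by (apply Hin; lra).
    rewrite st_1 in H4; auto. apply H4; lra.
Qed.

Record GD (A B : Type) := mkGD { MA : A -> A -> R -> R; MB : B -> B -> R -> R;
  xa : nat -> A; xb : nat -> B; t0 : R; gg : R; NN : nat }.
Arguments MA {A B}. Arguments MB {A B}. Arguments xa {A B}. Arguments xb {A B}.
Arguments t0 {A B}. Arguments gg {A B}. Arguments NN {A B}.

Definition GDok {A B} st (D : GD A B) :=
  cont_tnorm st /\ fuzzy_metric (MA D) st /\ non_archimedean (MA D) st /\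
  fuzzy_metric (MB D) st /\ non_archimedean (MB D) st /\ 0 < t0 D /\ in01 (gg D) /\
  (forall u i j, t0 D < u -> (i < NN D)%nat -> (j < NN D)%nat ->
      st (MB D (xb D i) (xb D j) u) (gg D) <= MA D (xa D i) (xa D j) u) /\
  (forall u i j, t0 D < u -> (i < NN D)%nat -> (j < NN D)%nat ->
      st (MA D (xa D i) (xa D j) u) (gg D) <= MB D (xb D i) (xb D j) u).

Definition gam {A B} (D : GD A B) s := if Rle_dec s (t0 D) then 0 else gg D.
Definition term {A B} st (D : GD A B) a b s i :=
  st (st (MA D a (xa D i) s) (gam D s)) (MB D (xb D i) b s).
Fixpoint crossN {A B} st (D : GD A B) a b s n :=
  match n with O => 0 | S k => Rmax (crossN st D a b s k) (term st D a b s k) end.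
Definition cross {A B} st (D : GD A B) a b s := crossN st D a b s (NN D).
Definition glue {A B} st (D : GD A B) (p q : A + B) s :=
  match p, q with
  | inl a, inl a' => MA D a a' s
  | inr b, inr b' => MB D b b' s
  | inl a, inr b => cross st D a b s
  | inr b, inl a => cross st D a b s
  end.

Lemma gam_in {A B} (D : GD A B) s : in01 (gg D) -> in01 (gam D s).
Proof. intros; unfold gam; destruct Rle_dec; auto. Qed.
Lemma gam_mono {A B} (D : GD A B) s s' : in01 (gg D) -> s <= s' -> gam D s <= gam D s'.
Proof. intros [] ?; unfold gam; repeat destruct Rle_dec; lra. Qed.

Ltac gdok H := let Hs := fresh "Hs" in let Ha := fresh "HAf" in let Han := fresh "HAn" in
  let Hb := fresh "HBf" in let Hbn := fresh "HBn" in let Ht := fresh "Ht0" in let Hg := fresh "Hg" in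
  let K1 := fresh "K1" in let K2 := fresh "K2" in
  destruct H as [Hs [Ha [Han [Hb [Hbn [Ht [Hg [K1 K2]]]]]]]].

Lemma term_in {A B} st (D : GD A B) a b s i : GDok st D -> 0 <= s -> in01 (term st D a b s i).
Proof. intros H Hs0. pose proof H as H'. gdok H'. unfold term.
  apply st_in; auto; [apply st_in; auto; [apply (fm_in _ st HAf); auto| apply gam_in; auto]|apply (fm_in _ st HBf); auto]. Qed.

Lemma crossN_in {A B} st (D : GD A B) a b s n : GDok st D -> 0 <= s -> in01 (crossN st D a b s n).
Proof. intros H Hs0. induction n; simpl; auto.
  pose proof (term_in st D a b s n H Hs0). unfold in01 in *. unfold Rmax; destruct Rle_dec; lra. Qed.

Lemma crossN_le {A B} st (D : GD A B) a b s n Rv : 0 <= Rv ->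
  (forall i, (i < n)%nat -> term st D a b s i <= Rv) -> crossN st D a b s n <= Rv.
Proof. intros H0 H. induction n; simpl; auto.
  assert (crossN st D a b s n <= Rv) by (apply IHn; intros; apply H; lia).
  assert (term st D a b s n <= Rv) by (apply H; lia).
  unfold Rmax; destruct Rle_dec; lra. Qed.

Lemma crossN_ge {A B} st (D : GD A B) a b s n i : (i < n)%nat -> term st D a b s i <= crossN st D a b s n.
Proof. induction n; intros Hi; [lia|]. simpl. destruct (Nat.eq_dec i n) as [->|Hne].
  - apply Rmax_r. - eapply Rle_trans; [apply IHn; lia| apply Rmax_l]. Qed.

Lemma st_crossN_le {A B} st (D : GD A B) a b s n W Rv : GDok st D -> 0 <= s -> in01 W -> 0 <= Rv ->
  (forall i, (i < n)%nat -> st (term st D a b s i) W <= Rv) -> st (crossN st D a b s n) W <= Rv.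
Proof. intros H Hs0 HW H0 Hi. pose proof H as H'. gdok H'. induction n; simpl.
  - rewrite st_0l; auto.
  - unfold Rmax; destruct Rle_dec; auto. Qed.

Lemma crossN_small {A B} st (D : GD A B) a b s n : GDok st D -> 0 <= s -> s <= t0 D -> crossN st D a b s n = 0.
Proof. intros H Hs0 Hst. pose proof H as H'. gdok H'. induction n; simpl; auto. rewrite IHn.
  unfold term, gam. destruct Rle_dec; [|lra].
  rewrite (st_0r st Hs _ (fm_in _ st HAf _ _ _ Hs0)), (st_0l st Hs _ (fm_in _ st HBf _ _ _ Hs0)).
  unfold Rmax; destruct Rle_dec; lra. Qed.

Lemma term_mono {A B} st (D : GD A B) a b s s' i : GDok st D -> 0 <= s -> s <= s' ->
  term st D a b s i <= term st D a b s' i.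
Proof. intros H Hs0 Hss. pose proof H as H'. gdok H'. unfold term.
  assert (in01 (MA D a (xa D i) s)) by (apply (fm_in _ st HAf); lra).
  assert (in01 (MA D a (xa D i) s')) by (apply (fm_in _ st HAf); lra).
  assert (in01 (MB D (xb D i) b s)) by (apply (fm_in _ st HBf); lra).
  assert (in01 (MB D (xb D i) b s')) by (apply (fm_in _ st HBf); lra).
  apply st_mono; auto; try (apply st_in; auto; apply gam_in; auto).
  - apply st_mono; auto; try apply gam_in; auto. apply (fm_mono _ st Hs HAf); lra. apply gam_mono; auto.
  - apply (fm_mono _ st Hs HBf); lra. Qed.

Lemma crossN_mono {A B} st (D : GD A B) a b s s' n : GDok st D -> 0 <= s -> s <= s' ->
  crossN st D a b s n <= crossN st D a b s' n.
Proof. intros H Hs0 Hss. induction n; simpl; [lra|].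
  pose proof (term_mono st D a b s s' n H Hs0 Hss). unfold Rmax; repeat destruct Rle_dec; lra. Qed.

#[local] Hint Resolve in01_0 in01_1 : core.

Ltac i01 H := repeat (apply (st_in _ H)); auto.

Lemma st_swap st : cont_tnorm st -> forall x y z, in01 x -> in01 y -> in01 z ->
  st x (st y z) = st y (st x z).
Proof. intros H x y z Hx Hy Hz. rewrite (st_assoc st H) by auto. rewrite (st_comm st H x y) by auto.
  rewrite <- (st_assoc st H) by auto. auto. Qed.

Ltac ra st H := repeat (rewrite <- (st_assoc st H) by i01 H).

Lemma AC1 st : cont_tnorm st -> forall P g Q W, in01 P -> in01 g -> in01 Q -> in01 W ->
  st (st (st P g) Q) W = st (st (st W P) g) Q.
Proof. intros H P g Q W HP Hg HQ HW. ra st H.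
  rewrite (st_comm st H Q W) by auto. rewrite (st_swap st H g W) by i01 H.
  rewrite (st_swap st H P W) by i01 H. auto. Qed.

Lemma AC2 st : cont_tnorm st -> forall a b c d e f, in01 a -> in01 b -> in01 c -> in01 d -> in01 e -> in01 f ->
  st (st (st a b) c) (st (st d e) f) = st (st a (st (st b e) (st c f))) d.
Proof. intros H a b c d e f Ha Hb Hc Hd He Hf. ra st H. f_equal. f_equal.
  rewrite (st_comm st H f d) by auto. rewrite (st_swap st H d e) by i01 H.
  rewrite (st_swap st H c e) by i01 H. auto. Qed.

Lemma AC3 st : cont_tnorm st -> forall a b c d e f, in01 a -> in01 b -> in01 c -> in01 d -> in01 e -> in01 f ->
  st (st (st a b) c) (st (st d e) f) = st (st c (st (st b e) (st a d))) f.
Proof. intros H a b c d e f Ha Hb Hc Hd He Hf. ra st H.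
  (* a(b(c(d(e f)))) = c(b(e(a(d f)))) *)
  rewrite (st_swap st H a b) by i01 H. rewrite (st_swap st H a c) by i01 H.
  rewrite (st_swap st H b c) by i01 H. f_equal. f_equal.
  rewrite (st_swap st H a d) by i01 H. rewrite (st_swap st H a e) by i01 H.
  rewrite (st_swap st H d e) by i01 H. f_equal. apply (st_swap st H); auto. Qed.

Ltac s01 := repeat (match goal with |- in01 ?x => tryif is_evar x then fail else idtac | _ => idtac end; first [ match goal with Hc : cont_tnorm _ |- _ => apply (st_in _ Hc) end
   | match goal with Hf : fuzzy_metric ?M _ |- in01 (?M _ _ _) => apply (fm_in _ _ Hf); lra end
   | apply gam_in; assumption | apply crossN_in; [assumption|lra] | apply term_in; [assumption|lra] | assumption | apply in01_1 | apply in01_0]).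
Ltac z01 := match goal with |- 0 <= ?x => let Hx01 := fresh in assert (Hx01 : in01 x) by s01; apply Hx01 end.
Ltac smono := match goal with Hc : cont_tnorm _ |- _ => apply (st_mono _ Hc); [s01|s01|s01|s01| |] end.

Lemma gam_key {A B} st (D : GD A B) t s i j : GDok st D -> 0 < t -> 0 < s -> (i < NN D)%nat -> (j < NN D)%nat ->
  st (st (gam D t) (gam D s)) (MB D (xb D i) (xb D j) (Rmax t s)) <= MA D (xa D i) (xa D j) (Rmax t s) /\
  st (st (gam D t) (gam D s)) (MA D (xa D i) (xa D j) (Rmax t s)) <= MB D (xb D i) (xb D j) (Rmax t s).
Proof.
  intros H Ht Hs' Hi Hj. pose proof H as H'. gdok H'.
  assert (Hu : 0 < Rmax t s) by (apply (Rlt_le_trans _ t); [lra|apply Rmax_l]).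
  unfold gam. destruct (Rle_dec t (t0 D)); [|destruct (Rle_dec s (t0 D))].
  - split; rewrite (st_0l _ Hs) by s01; rewrite (st_0l _ Hs) by s01; z01.
  - split; rewrite (st_0r _ Hs) by s01; rewrite (st_0l _ Hs) by s01; z01.
  - assert (t0 D < Rmax t s) by (apply (Rlt_le_trans _ t); [lra|apply Rmax_l]).
    split.
    + eapply Rle_trans; [|apply K1; auto]. rewrite (st_comm _ Hs _ (MB _ _ _ _)) by s01.
      smono; [lra|]. apply st_le_l; auto.
    + eapply Rle_trans; [|apply K2; auto]. rewrite (st_comm _ Hs _ (MA _ _ _ _)) by s01.
      smono; [lra|]. apply st_le_l; auto.
Qed.

Lemma glue_na {A B} st (D : GD A B) : GDok st D -> non_archimedean (glue st D) st.
Proof.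
  intros H p q r t s Ht Hs'. pose proof H as H'. gdok H'.
  assert (Htu : t <= Rmax t s) by apply Rmax_l. assert (Hsu : s <= Rmax t s) by apply Rmax_r.
  set (u := Rmax t s) in *. assert (Hu : 0 < u) by lra.
  destruct p as [a|b], q as [a'|b'], r as [a''|b'']; simpl.
  - apply HAn; auto.
  -
    rewrite (st_comm _ Hs) by s01. unfold cross. apply st_crossN_le; auto; try lra; try s01; try z01.
    intros i Hi. eapply Rle_trans; [|apply (crossN_ge _ _ _ _ _ _ i Hi)]. unfold term.
    rewrite (AC1 _ Hs) by s01. smono; [smono|].
    + apply HAn; auto.
    + apply gam_mono; auto.
    + apply (fm_mono _ _ Hs HBf); lra.
  -
    unfold cross. apply st_crossN_le; auto; try lra; try s01; try z01. intros i Hi.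
    rewrite (st_comm _ Hs) by s01. apply st_crossN_le; auto; try lra; try s01; try z01. intros j Hj.
    rewrite (st_comm _ Hs) by s01. unfold term. rewrite (AC2 _ Hs) by s01.
    destruct (gam_key st D t s i j H Ht Hs' Hi Hj) as [G1 _]. fold u in G1.
    apply Rle_trans with (st (st (MA D a (xa D i) t) (MA D (xa D i) (xa D j) u)) (MA D a'' (xa D j) s)).
    { smono; [smono|]; [apply Rle_refl| |apply Rle_refl].
      eapply Rle_trans; [|apply G1]. smono; [lra|].
      rewrite (fm_sym _ _ HBf (xb D j)) by lra. apply HBn; auto. }
    apply Rle_trans with (st (MA D a (xa D j) u) (MA D a'' (xa D j) s)).
    { smono; [|apply Rle_refl]. eapply Rle_trans; [apply HAn; auto; lra|].
      rewrite Rmax_right by lra. apply Rle_refl. }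
    rewrite (fm_sym _ _ HAf a''); [|lra]. eapply Rle_trans; [apply HAn; auto|]. rewrite Rmax_left by lra. lra.
  -
    unfold cross. apply st_crossN_le; auto; try lra; try s01; try z01. intros i Hi.
    eapply Rle_trans; [|apply (crossN_ge _ _ _ _ _ _ i Hi)]. unfold term.
    rewrite <- (st_assoc _ Hs) by s01. smono; [smono|].
    + apply (fm_mono _ _ Hs HAf); lra.
    + apply gam_mono; auto.
    + apply HBn; auto.
  -
    unfold cross. apply st_crossN_le; auto; try lra; try s01; try z01. intros i Hi.
    eapply Rle_trans; [|apply (crossN_ge _ _ _ _ _ _ i Hi)]. unfold term.
    rewrite (AC1 _ Hs) by s01. smono; [smono|].
    + rewrite (fm_sym _ _ HAf a') by lra. eapply Rle_trans; [apply HAn; auto|]. unfold u; rewrite (Rmax_comm s t); lra.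
    + apply gam_mono; auto.
    + apply (fm_mono _ _ Hs HBf); lra.
  -
    unfold cross. apply st_crossN_le; auto; try lra; try s01; try z01. intros i Hi.
    rewrite (st_comm _ Hs) by s01. apply st_crossN_le; auto; try lra; try s01; try z01. intros j Hj.
    rewrite (st_comm _ Hs) by s01. unfold term. rewrite (AC3 _ Hs) by s01.
    destruct (gam_key st D t s i j H Ht Hs' Hi Hj) as [_ G2]. fold u in G2.
    apply Rle_trans with (st (st (MB D b (xb D i) t) (MB D (xb D i) (xb D j) u)) (MB D (xb D j) b'' s)).
    { rewrite (fm_sym _ _ HBf b) by lra. smono; [smono|]; [apply Rle_refl| |apply Rle_refl].
      eapply Rle_trans; [|apply G2]. smono; [lra|].
      rewrite (fm_sym _ _ HAf a' (xa D i) t) by lra. apply HAn; auto. }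
    apply Rle_trans with (st (MB D b (xb D j) u) (MB D (xb D j) b'' s)).
    { smono; [|apply Rle_refl]. eapply Rle_trans; [apply HBn; auto; lra|].
      rewrite Rmax_right by lra. apply Rle_refl. }
    eapply Rle_trans; [apply HBn; auto|]. rewrite Rmax_left by lra. lra.
  -
    rewrite (st_comm _ Hs) by s01. unfold cross. apply st_crossN_le; auto; try lra; try s01; try z01. intros i Hi.
    eapply Rle_trans; [|apply (crossN_ge _ _ _ _ _ _ i Hi)]. unfold term.
    rewrite <- (st_assoc _ Hs) by s01. smono; [smono|].
    + apply (fm_mono _ _ Hs HAf); lra.
    + apply gam_mono; auto.
    + rewrite (fm_sym _ _ HBf b b' t) by lra. eapply Rle_trans; [apply HBn; auto|]. unfold u; rewrite (Rmax_comm s t); lra.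
  - apply HBn; auto.
Qed.

#[local] Hint Resolve in01_0 in01_1 : core.

Lemma Rmax_close a b c d e : Rabs (a - c) < e -> Rabs (b - d) < e -> Rabs (Rmax a b - Rmax c d) < e.
Proof. unfold Rmax; repeat destruct Rle_dec; unfold Rabs; repeat destruct Rcase_abs; lra. Qed.

Lemma term_lc {A B} st (D : GD A B) a b t i eps : GDok st D -> t0 D < t -> 0 < eps ->
  exists delta, 0 < delta /\ forall u, 0 <= u -> t - delta < u -> u <= t ->
    Rabs (term st D a b u i - term st D a b t i) < eps.
Proof.
  intros H Ht He. pose proof H as H'. gdok H'.
  assert (Htp : 0 < t) by lra.
  set (P := MA D a (xa D i) t). set (Q := MB D (xb D i) b t). set (g := gg D).
  assert (HP : in01 P) by (apply (fm_in _ _ HAf); lra).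
  assert (HQ : in01 Q) by (apply (fm_in _ _ HBf); lra).
  destruct (st_cont st Hs (st P g) Q (st_in _ Hs _ _ HP Hg) HQ eps He) as [d1 [Hd1 C1]].
  destruct (st_cont st Hs P g HP Hg d1 Hd1) as [d2 [Hd2 C2]].
  destruct (fm_lc _ _ HAf a (xa D i) t Htp d2 Hd2) as [dA [HdA LA]].
  destruct (fm_lc _ _ HBf (xb D i) b t Htp d1 Hd1) as [dB [HdB LB]].
  exists (Rmin dA (Rmin dB (t - t0 D))). split.
  { apply Rmin_pos; [lra|apply Rmin_pos; lra]. }
  intros u Hu0 Hu1 Hu2.
  pose proof (Rmin_l dA (Rmin dB (t - t0 D))). pose proof (Rmin_r dA (Rmin dB (t - t0 D))).
  pose proof (Rmin_l dB (t - t0 D)). pose proof (Rmin_r dB (t - t0 D)).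
  assert (Gu : gam D u = g). { unfold gam. destruct Rle_dec; [lra|auto]. }
  assert (Gt : gam D t = g). { unfold gam. destruct Rle_dec; [lra|auto]. }
  unfold term. rewrite Gu, Gt. rewrite Rabs_minus_sym.
  apply C1.
  - apply st_in; auto. apply (fm_in _ _ HAf); lra.
  - apply (fm_in _ _ HBf); lra.
  - apply C2; auto. apply (fm_in _ _ HAf); lra.
    rewrite Rabs_minus_sym. apply LA; lra.
    rewrite Rminus_diag, Rabs_R0; auto.
  - rewrite Rabs_minus_sym. apply LB; lra.
Qed.

Lemma crossN_lc {A B} st (D : GD A B) a b t n eps : GDok st D -> 0 < t -> 0 < eps ->
  exists delta, 0 < delta /\ forall u, 0 <= u -> t - delta < u -> u <= t ->
    Rabs (crossN st D a b u n - crossN st D a b t n) < eps.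
Proof.
  intros H Ht He. destruct (Rle_dec t (t0 D)).
  - exists 1. split; [lra|]. intros u Hu0 Hu1 Hu2.
    rewrite (crossN_small st D a b u n H Hu0) by lra. rewrite (crossN_small st D a b t n H) by lra.
    rewrite Rminus_diag, Rabs_R0; auto.
  - induction n.
    + exists 1. split; [lra|]. intros. simpl. rewrite Rminus_diag, Rabs_R0; auto.
    + destruct IHn as [d1 [Hd1 C1]].
      destruct (term_lc st D a b t n eps H) as [d2 [Hd2 C2]]; [lra|auto|].
      exists (Rmin d1 d2). split; [apply Rmin_pos; auto|].
      intros u Hu0 Hu1 Hu2. pose proof (Rmin_l d1 d2). pose proof (Rmin_r d1 d2).
      simpl. apply Rmax_close; [apply C1|apply C2]; lra.
Qed.

Lemma glue_fm {A B} st (D : GD A B) : GDok st D -> fuzzy_metric (glue st D) st.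
Proof.
  intros H. pose proof H as H'. gdok H'.
  assert (Gin : forall p q t, 0 <= t -> in01 (glue st D p q t)).
  { intros [a|b] [a'|b'] t Ht; simpl; try (apply (fm_in _ _ HAf); auto); try (apply (fm_in _ _ HBf); auto);
      apply crossN_in; auto. }
  assert (Gmono : forall p q t t', 0 <= t -> t <= t' -> glue st D p q t <= glue st D p q t').
  { intros [a|b] [a'|b'] t t' Ht Htt; simpl; try (apply (fm_mono _ _ Hs HAf); auto);
      try (apply (fm_mono _ _ Hs HBf); auto); apply crossN_mono; auto. }
  split; [exact Gin|]. split.
  { intros [a|b] [a'|b']; simpl; try apply (fm_0 _ _ HAf); try apply (fm_0 _ _ HBf);
      apply crossN_small; auto; lra. }
  split.
  { intros [a|b] [a'|b']; simpl; split.
    - intros Hc. f_equal. apply (proj1 (proj1 (proj2 (proj2 HAf)) a a')). auto.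
    - intros Hc. injection Hc as E. rewrite E. intros; apply (fm_refl _ _ HAf); auto.
    - intros Hc. specialize (Hc (t0 D) Ht0). unfold cross in Hc. rewrite crossN_small in Hc; auto; lra.
    - discriminate.
    - intros Hc. specialize (Hc (t0 D) Ht0). unfold cross in Hc. rewrite crossN_small in Hc; auto; lra.
    - discriminate.
    - intros Hc. f_equal. apply (proj1 (proj1 (proj2 (proj2 HBf)) b b')). auto.
    - intros Hc. injection Hc as E. rewrite E. intros; apply (fm_refl _ _ HBf); auto. }
  split.
  { intros [a|b] [a'|b'] t Ht; simpl; auto; [apply (fm_sym _ _ HAf); auto|apply (fm_sym _ _ HBf); auto]. }
  split.
  { intros x y z t s Ht Hs'. eapply Rle_trans; [apply (glue_na st D H); auto|].
    apply Gmono; [apply Rlt_le, (Rlt_le_trans _ t); [auto|apply Rmax_l]|].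
    unfold Rmax; destruct Rle_dec; lra. }
  { intros [a|b] [a'|b'] t Ht; simpl; try apply (fm_lc _ _ HAf); try apply (fm_lc _ _ HBf); auto;
      intros eps Heps; apply crossN_lc; auto. }
Qed.

Lemma glue_adm {A B} st (D : GD A B) : GDok st D -> admissible (MA D) (MB D) st (glue st D).
Proof.
  intros H. split; [apply glue_fm; auto|]. split; [apply glue_na; auto|]. split; intros; simpl; auto.
Qed.

Lemma glue_H {A B} st (D : GD A B) t : GDok st D -> t0 D < t -> inhabited A -> inhabited B ->
  (forall a, exists i, (i < NN D)%nat /\ gg D <= MA D a (xa D i) (t0 D)) ->
  (forall b, exists i, (i < NN D)%nat /\ gg D <= MB D b (xb D i) (t0 D)) ->
  st (gg D) (gg D) <= H_sum (glue st D) t.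
Proof.
  intros H Ht [a0] [b0] NA NB. pose proof H as H'. gdok H'.
  assert (Htp : 0 < t) by lra.
  assert (B1 : forall (E : R -> Prop), (forall u, E u -> exists a b, u = cross st D a b t) -> forall r, E r -> r <= 1).
  { intros E HE r Er. destruct (HE r Er) as [a [b ->]]. apply crossN_in; auto; lra. }
  unfold H_sum. apply Rmin_glb.
  - apply (inf_R_ge _ _ (sup_R (fun u => exists b : B, u = glue st D (inl a0) (inr b) t))); [eauto|].
    intros r [a ->]. destruct (NA a) as [i [Hi Hai]].
    apply Rle_trans with (cross st D a (xb D i) t).
    + eapply Rle_trans; [|apply crossN_ge; eauto]. unfold term.
      rewrite (fm_refl _ _ HBf) by lra. rewrite (st_1 _ Hs) by s01.
      assert (Gt : gam D t = gg D). { unfold gam. destruct Rle_dec; [lra|auto]. }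
      rewrite Gt. smono; [|lra]. eapply Rle_trans; [apply Hai|]. apply (fm_mono _ _ Hs HAf); lra.
    + apply (sup_R_ge _ 1); [|exists (xb D i); reflexivity].
      apply B1. intros u [b ->]. simpl. eauto.
  - apply (inf_R_ge _ _ (sup_R (fun u => exists a : A, u = glue st D (inl a) (inr b0) t))); [eauto|].
    intros r [b ->]. destruct (NB b) as [i [Hi Hbi]].
    apply Rle_trans with (cross st D (xa D i) b t).
    + eapply Rle_trans; [|apply crossN_ge; eauto]. unfold term.
      rewrite (fm_refl _ _ HAf) by lra. rewrite (st_1l _ Hs) by s01.
      assert (Gt : gam D t = gg D). { unfold gam. destruct Rle_dec; [lra|auto]. }
      rewrite Gt. smono; [lra|]. rewrite (fm_sym _ _ HBf) by lra.
      eapply Rle_trans; [apply Hbi|]. apply (fm_mono _ _ Hs HBf); lra.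
    + apply (sup_R_ge _ 1); [|exists (xa D i); reflexivity].
      apply B1. intros u [a ->]. simpl. eauto.
Qed.

#[local] Hint Resolve in01_0 in01_1 : core.

Lemma key_ineq st : cont_tnorm st -> forall a0 b0 au bu g c d, in01 a0 -> in01 b0 -> in01 au -> in01 bu -> in01 g ->
  in01 c -> c <= b0 -> b0 <= bu -> 0 < st c g -> Rabs (a0 - b0) < d -> st b0 g <= b0 - d ->
  (au < bu -> au / st bu g >= a0 / st b0 g) -> st bu g <= au.
Proof.
  intros H a0 b0 au bu g c d Ha0 Hb0 Hau Hbu Hg Hc Hcb Hbb Hpos Hd Hm Hr.
  destruct (Rle_or_lt bu au) as [Hle|Hlt].
  - eapply Rle_trans; [apply st_le_l; auto|auto].
  - specialize (Hr Hlt).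
    assert (S0 : st c g <= st b0 g) by (apply st_mono; auto; lra).
    assert (S1 : st b0 g <= st bu g) by (apply st_mono; auto; lra).
    assert (A0 : st b0 g <= a0) by (apply Rabs_def2 in Hd; lra).
    set (s0 := st b0 g) in *. set (su := st bu g) in *.
    assert (Hs0 : 0 < s0) by lra. assert (Hsu : 0 < su) by lra.
    assert (1 <= a0 / s0). { apply (Rmult_le_reg_r s0); auto. unfold Rdiv. rewrite Rmult_assoc, Rinv_l by lra. lra. }
    assert (1 <= au / su) by lra.
    apply (Rmult_le_reg_r (/ su)); [apply Rinv_0_lt_compat; auto|]. rewrite Rinv_r by lra. unfold Rdiv in *. lra.
Qed.

Lemma choose_e st : cont_tnorm st -> forall c, 0 < c <= 1 -> forall r, 0 < r ->
  exists e, 0 < e < 1 /\ e <= r /\ 0 < st c (1 - e).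
Proof.
  intros H c Hc r Hr. assert (Hc1 : in01 c) by (unfold in01; lra).
  destruct (st_cont st H c 1 Hc1 in01_1 c) as [d [Hd Cd]]; [lra|].
  exists (Rmin (1/2) (Rmin (d/2) r)).
  pose proof (Rmin_l (1/2) (Rmin (d/2) r)). pose proof (Rmin_r (1/2) (Rmin (d/2) r)).
  pose proof (Rmin_l (d/2) r). pose proof (Rmin_r (d/2) r).
  assert (0 < Rmin (1/2) (Rmin (d/2) r)) by (apply Rmin_pos; [lra|apply Rmin_pos; lra]).
  split; [lra|]. split; [lra|].
  set (e := Rmin (1/2) (Rmin (d/2) r)) in *.
  assert (Rabs (st c 1 - st c (1 - e)) < c).
  { apply Cd; auto. unfold in01; lra. rewrite Rminus_diag, Rabs_R0; lra.
    rewrite Rabs_right; lra. }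
  rewrite st_1 in H5; auto. apply Rabs_def2 in H5. lra.
Qed.

Lemma small_k m : 0 < m -> exists k : nat, 1 / (INR k + 1) < m.
Proof.
  intros Hm. destruct (archimed (1 / m)) as [H1 H2].
  assert (0 < 1 / m) by (apply Rdiv_lt_0_compat; lra).
  exists (Z.to_nat (up (1 / m))).
  rewrite INR_IZR_INZ, Z2Nat.id by (apply le_IZR; lra).
  assert (0 < IZR (up (1 / m)) + 1) by lra.
  apply (Rmult_lt_reg_r (IZR (up (1 / m)) + 1)); auto.
  unfold Rdiv. rewrite Rmult_assoc, Rinv_l, Rmult_1_r by lra.
  assert (1 / m * m = 1) by (field; lra).
  assert (m * (1/m) < m * IZR (up (1/m))) by (apply Rmult_lt_compat_l; lra).
  replace (m * (1/m)) with 1 in H4 by (field; lra). nra.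
Qed.

Lemma diam_le {X} (M : X -> X -> R -> R) s c x y : Rbar_le (Finite c) (diam M s) -> c <= M x y s.
Proof.
  intros H. unfold diam in H. pose proof (Glb_Rbar_correct (fun r => exists x y : X, r = M x y s)) as [Hlb _].
  assert (A := Hlb (M x y s) (ex_intro _ x (ex_intro _ y eq_refl))).
  destruct (Glb_Rbar _); simpl in *; try contradiction; lra.
Qed.

#[local] Hint Resolve in01_0 in01_1 : core.

Theorem mainTheorem7
  (star : R -> R -> R) (X : nat -> Type) (M : forall n, X n -> X n -> R -> R) :
  cont_tnorm star ->
  (forall n, inhabited (X n)) ->
  (forall n, fuzzy_metric (M n) star) ->
  (forall n, non_archimedean (M n) star) ->
  (forall n, fcompact_space (M n)) ->
  (* (1) *)
  TN1 star ->
  (* (2) *)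
  (exists C : R -> R,
      (forall s, 0 < s -> 0 < C s <= 1) /\
      (forall s s', 0 < s -> s <= s' -> C s <= C s') /\
      (forall s, 0 < s -> forall eps, 0 < eps -> exists delta, 0 < delta /\
          forall u, 0 < u -> s - delta < u -> u <= s -> Rabs (C u - C s) < eps) /\
      (forall s n, 0 < s -> Rbar_le (Finite (C s)) (diam (M n) s))) ->
  (* (3) and (4) *)
  (exists Nf : R -> R -> nat,
      (forall t eps, 0 < t -> 0 < eps < 1 ->
         forall n, Rbar_le (Cov (M n) eps t) (Finite (INR (Nf eps t)))) /\
      (forall t eps, 0 < t -> 0 < eps < 1 ->
         exists x : forall n, nat -> X n,
           (forall n, is_net (M n) t eps (Nf eps t) (x n)) /\
           (forall n m s i j, t < s -> (i < Nf eps t)%nat -> (j < Nf eps t)%nat ->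
              M n (x n i) (x n j) s < M m (x m i) (x m j) s ->
              M n (x n i) (x n j) s / star (M m (x m i) (x m j) s) (1 - eps)
              >= M n (x n i) (x n j) t / star (M m (x m i) (x m j) t) (1 - eps)))) ->
  exists phi : nat -> nat,
    (forall k, (phi k < phi (S k))%nat) /\
    (forall t eps, 0 < t -> 0 < eps < 1 ->
       exists n0 : nat, forall n m, (n0 <= n)%nat -> (n0 <= m)%nat ->
         M_GH (M (phi n)) (M (phi m)) star t > 1 - eps).
Proof.
  intros Hst Hinh Hfm Hna _ HTN [C [HC1 [HC2 [HC3 HC4]]]] [Nf [_ HNet]].
  pose (t0k := fun k : nat => 1 / (INR k + 1)).
  assert (Ht0k : forall k, 0 < t0k k).
  { intro k. unfold t0k. apply Rdiv_lt_0_compat; [lra|]. pose proof (pos_INR k); lra. }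
  assert (HCk : forall k, 0 < C (t0k k) <= 1) by (intro k; apply HC1; auto).
  pose (Pe := fun k e => 0 < e < 1 /\ e <= 1 / (INR k + 2) /\ 0 < star (C (t0k k)) (1 - e)).
  pose (ek := fun k => epsilon (inhabits 0) (Pe k)).
  assert (Hek : forall k, Pe k (ek k)).
  { intro k. unfold ek. apply epsilon_spec. apply choose_e; auto.
    apply Rdiv_lt_0_compat; [lra|]. pose proof (pos_INR k); lra. }
  pose (dummy := fun n (_ : nat) => epsilon (Hinh n) (fun _ => True)).
  pose (Pnet := fun k (x : forall n, nat -> X n) =>
    (forall n, is_net (M n) (t0k k) (ek k) (Nf (ek k) (t0k k)) (x n)) /\
    (forall n m s i j, t0k k < s -> (i < Nf (ek k) (t0k k))%nat -> (j < Nf (ek k) (t0k k))%nat ->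
              M n (x n i) (x n j) s < M m (x m i) (x m j) s ->
              M n (x n i) (x n j) s / star (M m (x m i) (x m j) s) (1 - ek k)
              >= M n (x n i) (x n j) (t0k k) / star (M m (x m i) (x m j) (t0k k)) (1 - ek k))).
  pose (xs := fun k => epsilon (inhabits dummy) (Pnet k)).
  assert (Hxs : forall k, Pnet k (xs k)).
  { intro k. unfold xs. apply epsilon_spec. apply HNet; auto. destruct (Hek k) as [? _]; auto. }
  pose (Pd := fun k d => 0 < d /\ forall b, C (t0k k) <= b <= 1 -> star b (1 - ek k) <= b - d).
  pose (dk := fun k => epsilon (inhabits 0) (Pd k)).
  assert (Hdk : forall k, Pd k (dk k)).
  { intro k. unfold dk. apply epsilon_spec. apply margin; auto. destruct (Hek k) as [? _]; lra. }
  pose (Nk := fun k => Nf (ek k) (t0k k)).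
  pose (R' := fun k n m => forall i j, (i < Nk k)%nat -> (j < Nk k)%nat ->
     Rabs (M n (xs k n i) (xs k n j) (t0k k) - M m (xs k m i) (xs k m j) (t0k k)) < dk k).
  assert (Href : forall k P, inf P -> exists Q, inf Q /\ (forall n, Q n -> P n) /\ (forall n m, Q n -> Q m -> R' k n m)).
  { intros k P HP.
    destruct (boxes_close (list_prod (seq 0 (Nk k)) (seq 0 (Nk k)))
       (fun p n => M n (xs k n (fst p)) (xs k n (snd p)) (t0k k)) P (dk k)) as [Q [HQ [HQP HQc]]]; auto.
    - apply (proj1 (Hdk k)).
    - intros p n. apply (fm_in _ _ (Hfm n)). apply Rlt_le, Ht0k.
    - exists Q. split; auto. split; auto. intros n m Qn Qm i j Hi Hj.
      apply (HQc (i, j)); auto. apply in_prod; apply in_seq; lia. }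
  destruct (diagonal R' Href) as [phi [Hphi Hgood]].
  exists phi. split; auto.
  intros t eps Ht Heps.
  destruct (st_cont star Hst 1 1 in01_1 in01_1 eps) as [d0 [Hd0 Cd0]]; [lra|].
  destruct (small_k (Rmin t d0)) as [k Hk]; [apply Rmin_pos; auto|].
  pose proof (Rmin_l t d0). pose proof (Rmin_r t d0).
  exists k. intros n m Hn Hm.
  set (p := phi n) in *. set (q := phi m) in *.
  destruct (Hek k) as [He1 [He2 He3]]. destruct (Hdk k) as [Hd1 Hd2]. destruct (Hxs k) as [Hnet Hrat].
  assert (Hek2 : ek k < d0).
  { assert (1 / (INR k + 2) <= 1 / (INR k + 1)).
    { unfold Rdiv. rewrite !Rmult_1_l. apply Rinv_le_contravar; pose proof (pos_INR k); lra. }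
    set (z1 := 1 / (INR k + 1)) in *. set (z2 := 1 / (INR k + 2)) in *. lra. }
  assert (Htk : t0k k < t) by (unfold t0k; set (z1 := 1 / (INR k + 1)) in *; lra).
  set (g := 1 - ek k) in *. assert (Hg : in01 g) by (unfold in01, g; lra).
  set (D := mkGD (X p) (X q) (M p) (M q) (xs k p) (xs k q) (t0k k) g (Nk k)).
  assert (Rpq := Hgood k n m Hn Hm). assert (Rqp := Hgood k m n Hm Hn). fold p q in Rpq, Rqp.
  assert (Cle : forall r x y, C (t0k k) <= M r x y (t0k k)).
  { intros r x y. apply diam_le. apply HC4. auto. }
  assert (OK : GDok star D).
  { split; auto. split; [apply Hfm|]. split; [apply Hna|]. split; [apply Hfm|]. split; [apply Hna|].
    split; [apply Ht0k|]. split; auto. simpl. split.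
    - intros u i j Hu Hi Hj. pose proof (Ht0k k).
      apply (key_ineq star Hst (M p (xs k p i) (xs k p j) (t0k k)) (M q (xs k q i) (xs k q j) (t0k k))
             _ _ g (C (t0k k)) (dk k));
      [apply (fm_in _ _ (Hfm _)); lra|apply (fm_in _ _ (Hfm _)); lra|apply (fm_in _ _ (Hfm _)); lra
      |apply (fm_in _ _ (Hfm _)); lra|exact Hg|unfold in01; pose proof (HCk k); lra|apply Cle
      |apply (fm_mono _ _ Hst (Hfm q)); lra|exact He3|apply Rpq; auto
      |apply Hd2; split; [apply Cle|apply (fm_in _ _ (Hfm q)); lra]|intros Hlt; apply Hrat; auto].
    - intros u i j Hu Hi Hj. pose proof (Ht0k k).
      apply (key_ineq star Hst (M q (xs k q i) (xs k q j) (t0k k)) (M p (xs k p i) (xs k p j) (t0k k))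
             _ _ g (C (t0k k)) (dk k));
      [apply (fm_in _ _ (Hfm _)); lra|apply (fm_in _ _ (Hfm _)); lra|apply (fm_in _ _ (Hfm _)); lra
      |apply (fm_in _ _ (Hfm _)); lra|exact Hg|unfold in01; pose proof (HCk k); lra|apply Cle
      |apply (fm_mono _ _ Hst (Hfm p)); lra|exact He3|apply Rqp; auto
      |apply Hd2; split; [apply Cle|apply (fm_in _ _ (Hfm p)); lra]|intros Hlt; apply Hrat; auto]. }
  assert (HH : star g g <= H_sum (glue star D) t).
  { change (star (gg D) (gg D) <= H_sum (glue star D) t). apply glue_H; auto.
    - intros a. destruct (Hnet p a) as [i [Hi Hai]]. exists i. split; auto. simpl. unfold g; lra.
    - intros b. destruct (Hnet q b) as [i [Hi Hbi]]. exists i. split; auto. simpl. unfold g; lra. }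
  assert (Hgg : star g g > 1 - eps).
  { assert (Rabs (star 1 1 - star g g) < eps).
    { apply Cd0; auto; unfold g; rewrite Rabs_right; lra. }
    rewrite st_1 in H1; auto. apply Rabs_def2 in H1. lra. }
  unfold M_GH. apply Rlt_gt. apply Rlt_le_trans with (star g g); [lra|].
  eapply Rle_trans; [apply HH|]. apply (sup_R_ge _ 1).
  - intros r [M' [Hadm ->]]. destruct Hadm as [Hf' _].
    destruct (Hinh p) as [a0].
    unfold H_sum. eapply Rle_trans; [apply Rmin_l|].
    apply (inf_R_le _ _ (sup_R (fun u => exists b : X q, u = M' (inl a0) (inr b) t))); [lra| exists a0; auto|].
    apply sup_R_le; [lra|]. intros r [b ->]. apply (fm_in _ _ Hf'); lra.
  - exists (glue star D). split; auto. apply glue_adm; auto.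
Qed.
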